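(* Let $s\ge2$. Let $V_0$ be the set of vertices reachable from $v_0=(\mathbf 0,+1)$ in the Markov chain below, and $G_0$ the directed graph on $V_0$ with an edge $v\to v'$ whenever $P(v,v')>0$. Then $V_0$ is finite, $G_0$ is strongly connected, $G_0$ is aperiodic (the greatest common divisor of the lengths of its directed cycles is $1$), and $G_0$ is preserved by the map $\mathcal R(\mathbf u,\sigma)=(\mathbf u,-\sigma)$, i.e. $\mathcal R(V_0)=V_0$.
   Context: Vertices are pairs $(\mathbf u,\sigma)$ with $\mathbf u=(u_\omega)_{\omega\in\{0,1\}^s}\in\mathbb{Z}^{\{0,1\}^s}$ and $\sigma\in\{\pm1\}$. For $\mathbf e=(e_0,\dots,e_s)\in\{0,1\}^{s+1}$ let $\delta(\mathbf u;\mathbf e)_\omega=\lfloor (u_\omega+e_0+\sum_{i=1}^s\omega_ie_i)/2\rfloor$, and $|\mathbf u|=\sum_\omega|u_\omega|$. Transition probabilities: $P((\mathbf u,\sigma),(\mathbf u',\sigma'))=\mathbb{P}_{\mathbf e}(\delta(\mathbf u;\mathbf e)=\mathbf u')$ if $\sigma'=\sigma(-1)^{|\mathbf u|}$, and $0$ otherwise, where $\mathbf e$ is uniformly distributed on $\{0,1\}^{s+1}$. A vertex $v'$ is reachable from $v$ if there is a directed path (possibly of length $0$) from $v$ to $v'$ along edges with positive transition probability. *)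

(* Defs.v *)
From mathcomp Require Import all_boot all_order all_algebra.
Set Implicit Arguments. Unset Strict Implicit. Unset Printing Implicit Defensive.
Import Order.TTheory GRing.Theory Num.Theory.
Local Open Scope ring_scope.

Definition omega_t (s : nat) := {ffun 'I_s -> bool}.
Definition uvec (s : nat) := {ffun omega_t s -> int}.
(* e in {0,1}^{s+1}, e_0 = e ord0, e_i = e (lift ord0 (i-1)) *)
Definition evec (s : nat) := {ffun 'I_s.+1 -> bool}.
(* vertices (u, sigma); sigma in {+1,-1} is stored as an int *)
Definition vertex (s : nat) := (uvec s * int)%type.

Definition delta (s : nat) (u : uvec s) (e : evec s) : uvec s :=
  [ffun w : omega_t s =>
     ((u w + (e ord0 : nat)%:Z
        + (\sum_(i < s) ((w i && e (lift ord0 i)) : nat))%:Z) %/ 2)%Z].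

Definition unorm (s : nat) (u : uvec s) : nat := (\sum_(w : omega_t s) `|u w|%N)%N.

Definition P (s : nat) (v v' : vertex s) : rat :=
  if v'.2 == v.2 * (-1) ^+ unorm v.1 then
    (#|[set e : evec s | delta v.1 e == v'.1]|)%:R / (2 ^ s.+1)%:R
  else 0.

Definition edge (s : nat) (v v' : vertex s) : bool := 0 < P v v'.

Inductive reachable (s : nat) : vertex s -> vertex s -> Prop :=
| reach_refl v : reachable v v
| reach_step v w x : edge v w -> reachable w x -> reachable v x.

Definition v0 (s : nat) : vertex s := ([ffun _ => 0], 1).

Definition V0 (s : nat) (v : vertex s) : Prop := reachable (v0 s) v.

Definition dcycle (s : nat) (p : seq (vertex s)) : Prop :=
  [/\ p != [::], uniq p, cycle (@edge s) p & forall x, x \in p -> V0 x].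

Definition Rmap (s : nat) (v : vertex s) : vertex s := (v.1, - v.2).

(* Main.v *)
Require Import Defs.
From mathcomp Require Import all_boot all_order all_algebra zify.
Set Implicit Arguments. Unset Strict Implicit. Unset Printing Implicit Defensive.
Import Order.TTheory GRing.Theory Num.Theory.
Local Open Scope ring_scope.

Section S.
Variable s : nat.

Lemma reach_trans (a b c : vertex s) : reachable a b -> reachable b c -> reachable a c.
Proof. elim=> // v w x E _ IH H; apply: reach_step E (IH H). Qed.

Lemma reach_edge (a b : vertex s) : edge a b -> reachable a b.
Proof. by move=> E; apply: reach_step E (reach_refl _). Qed.

Lemma edge_of (v w : vertex s) (e : evec s) :
  w.1 = delta v.1 e -> w.2 = v.2 * (-1) ^+ unorm v.1 -> edge v w.
Proof.
move=> h1 h2; rewrite /edge /P h2 eqxx.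
apply: divr_gt0; last by rewrite ltr0n expn_gt0.
rewrite ltr0n card_gt0; apply/set0Pn; exists e; by rewrite inE h1.
Qed.

Lemma edge_inv (v w : vertex s) : edge v w ->
  w.2 = v.2 * (-1) ^+ unorm v.1 /\ exists e, delta v.1 e = w.1.
Proof.
rewrite /edge /P; case: ifP => [/eqP h|]; last by rewrite ltxx.
move=> H; split=> //.
have : (0 < #|[set e : evec s | delta v.1 e == w.1]|)%N.
  move: H; case: #|[set e : evec s | delta v.1 e == w.1]| => //.
  by rewrite mul0r ltxx.
by rewrite card_gt0 => /set0Pn [e]; rewrite inE => /eqP; exists e.
Qed.

Lemma edge_R (v w : vertex s) : edge v w -> edge (Rmap v) (Rmap w).
Proof. by rewrite /edge /P /Rmap /= mulNr eqr_opp. Qed.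

Lemma reach_R (v w : vertex s) : reachable v w -> reachable (Rmap v) (Rmap w).
Proof. elim=> [x|a b c E _ IH]; first exact: reach_refl. exact: reach_step (edge_R E) IH. Qed.

Definition e_single (b : bool) (i : 'I_s) : evec s :=
  [ffun k => if unlift ord0 k is Some j then j == i else b].
Definition ezero : evec s := [ffun _ => false].
Definition zero : uvec s := [ffun _ => 0].

Lemma delta_single (u : uvec s) b (i : 'I_s) : delta u (e_single b i) =
  [ffun w => ((u w + (b:nat)%:Z + (w i : nat)%:Z) %/ 2)%Z].
Proof.
apply/ffunP => w; rewrite !ffunE unlift_none.
congr ((_ + _ + Posz _) %/ _)%Z.
under eq_bigr => k _ do rewrite ffunE liftK.
rewrite (bigD1 i) //= eqxx andbT big1 ?addn0 // => k /negbTE ->; by rewrite andbF.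
Qed.

Lemma delta_zero (u : uvec s) : delta u ezero = [ffun w => ((u w) %/ 2)%Z].
Proof.
apply/ffunP => w; rewrite !ffunE /= big1 ?addr0 // => k _; by rewrite ffunE andbF.
Qed.

Lemma unorm_zero : unorm zero = 0%N.
Proof. by rewrite /unorm big1 // => w _; rewrite ffunE. Qed.

End S.
Section S2.
Variable s : nat.

Lemma half_and (b1 b2 : bool) : (((b1:nat)%:Z + (false:nat)%:Z + (b2:nat)%:Z) %/ 2)%Z = ((b1 && b2 : bool) : nat)%:Z.
Proof. by case: b1; case: b2. Qed.
Lemma half1 (b2 : bool) : (((0:int) + (true:nat)%:Z + (b2:nat)%:Z) %/ 2)%Z = (b2 : nat)%:Z.
Proof. by case: b2. Qed.

Definition A (j : nat) : uvec s := [ffun w : omega_t s => ([forall i : 'I_s, (i <= j)%N ==> w i] : nat)%:Z].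

Lemma A0 (H : (0 < s)%N) : A 0 = delta (zero s) (e_single true (Ordinal H)).
Proof.
rewrite delta_single; apply/ffunP => w; rewrite !ffunE half1; congr (Posz (nat_of_bool _)).
apply/forallP/idP => [K | K i].
  by have := K (Ordinal H); rewrite leqnn.
apply/implyP => hi; suff -> : i = Ordinal H by [].
by apply: val_inj => /=; lia.
Qed.

Lemma AS j (H : (j.+1 < s)%N) : A j.+1 = delta (A j) (e_single false (Ordinal H)).
Proof.
rewrite delta_single; apply/ffunP => w; rewrite !ffunE half_and; congr (Posz (nat_of_bool _)).
apply/forallP/andP => [K | [/forallP K1 K2] i].
  split; last by have := K (Ordinal H); rewrite leqnn.
  apply/forallP => i; apply/implyP => hi; exact: (implyP (K i)) (leqW hi).
apply/implyP; rewrite leq_eqVlt => /orP [/eqP hi | hi].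
  by have -> : i = Ordinal H by apply: val_inj.
exact: (implyP (K1 i)).
Qed.

Lemma Aloop (H : (0 < s)%N) : A s.-1 = delta (A s.-1) (e_single false (Ordinal H)).
Proof.
rewrite delta_single; apply/ffunP => w; rewrite !ffunE half_and; congr (Posz (nat_of_bool _)).
case: (boolP [forall _, _]) => //= /forallP K.
by rewrite (implyP (K (Ordinal H)) (leq0n _)).
Qed.

Lemma Afin_zero : delta (A s.-1) (ezero s) = zero s.
Proof. by rewrite delta_zero; apply/ffunP => w; rewrite !ffunE; case: [forall _, _]. Qed.

Lemma unorm_A : unorm (A s.-1) = 1%N.
Proof.
rewrite /unorm (eq_bigr (fun w => nat_of_bool (w == [ffun => true]))).
  by rewrite (bigD1 [ffun => true]) //= eqxx big1 // => w /negbTE ->.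
move=> w _; rewrite ffunE absz_nat; congr nat_of_bool.
apply/forallP/eqP => [K | -> i].
  apply/ffunP => i; rewrite ffunE; apply: (implyP (K i)).
  by have := ltn_ord i; lia.
by rewrite ffunE implybT.
Qed.

Lemma chain j (Hj : (j < s)%N) (sg : int) : exists n, reachable (zero s, sg) (A j, sg * (-1) ^+ n).
Proof.
elim: j Hj => [|j IH] Hj.
  exists (unorm (zero s)); apply: reach_edge; apply: (edge_of (e := e_single true (Ordinal Hj))) => //=.
  exact: A0.
have [n Hn] := IH (ltnW Hj).
exists (n + unorm (A j))%N; apply: reach_trans Hn _; apply: reach_edge.
apply: (edge_of (e := e_single false (Ordinal Hj))) => /=; first exact: AS.
by rewrite exprD mulrA.
Qed.

Lemma loopA (Hs : (0 < s)%N) (t : int) : reachable (A s.-1, t) (A s.-1, - t).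
Proof.
apply: reach_edge; apply: (edge_of (e := e_single false (Ordinal Hs))) => /=; first exact: Aloop.
by rewrite unorm_A expr1 mulrN1.
Qed.

Lemma downA (t : int) : reachable (A s.-1, t) (zero s, - t).
Proof.
apply: reach_edge; apply: (edge_of (e := ezero s)) => /=; first by rewrite Afin_zero.
by rewrite unorm_A expr1 mulrN1.
Qed.

Lemma flip (Hs : (0 < s)%N) (sg : int) : reachable (zero s, sg) (zero s, - sg).
Proof.
have Hs1 : (s.-1 < s)%N by lia.
have [n Hn] := chain Hs1 sg.
move: Hn; rewrite -signr_odd; case: (odd n) => /= Hn.
  apply: reach_trans Hn _; apply: reach_trans (loopA Hs _) _.
  by rewrite mulrN1 opprK; apply: downA.
by rewrite mulr1 in Hn; apply: reach_trans Hn (downA _).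
Qed.
End S2.
Section S3.
Variable s : nat.

Definition Inv (v : vertex s) : Prop :=
  (forall w, exists n, (n <= s)%N /\ v.1 w = n%:Z) /\ (v.2 = 1 \/ v.2 = -1).

Lemma Inv_edge (v w : vertex s) : edge v w -> Inv v -> Inv w.
Proof.
move=> /edge_inv [h2 [e he]] [hu hs]; split.
  move=> w'; rewrite -he ffunE; have [n [hn ->]] := hu w'.
  set b := nat_of_bool (e ord0).
  set S := (\sum_(i < s) _)%N.
  have hb : (b <= 1)%N by rewrite /b; case: (e ord0).
  have hS : (S <= s)%N.
    rewrite /S; apply: (@leq_trans (\sum_(i < s) 1)%N).
      by apply: leq_sum => i _; exact: leq_b1.
    by rewrite sum1_card card_ord.
  exists ((n + b + S) %/ 2)%N; split; first by lia.
  by rewrite -!PoszD divz_nat.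
rewrite h2 -signr_odd; case: hs => ->; case: odd => /=;
  rewrite ?mulr1 ?mulN1r ?opprK; auto.
Qed.

Lemma reach_Inv (v w : vertex s) : reachable v w -> Inv v -> Inv w.
Proof. elim=> // a b c E _ IH H; exact: IH (Inv_edge E H). Qed.

Lemma descent (g : omega_t s -> nat) (sg : int) k : exists n,
  reachable ([ffun w => (g w)%:Z], sg) ([ffun w => (g w %/ 2 ^ k)%N%:Z], sg * (-1) ^+ n).
Proof.
elim: k => [|k [n Hn]].
  exists 0%N; rewrite expr0 mulr1.
  have -> : [ffun w => (g w %/ 2 ^ 0)%N%:Z] = [ffun w => (g w)%:Z].
    by apply/ffunP => w; rewrite !ffunE expn0 divn1.
  exact: reach_refl.
exists (n + unorm [ffun w => (g w %/ 2 ^ k)%N%:Z])%N; apply: reach_trans Hn _.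
apply: reach_edge; apply: (edge_of (e := ezero s)) => /=; last by rewrite exprD mulrA.
by rewrite delta_zero; apply/ffunP => w; rewrite !ffunE divz_nat expnSr divnMA.
Qed.

Lemma to_v0 (Hs : (0 < s)%N) (v : vertex s) : Inv v -> reachable v (v0 s).
Proof.
case: v => u sg [hu hsg] /=.
pose g := fun w => `|u w|%N.
have Hu : u = [ffun w => (g w)%:Z].
  by apply/ffunP => w; rewrite ffunE /g; have [n [_ ->]] := hu w; rewrite absz_nat.
have [n Hn] := descent g sg s.
have Hz : [ffun w => (g w %/ 2 ^ s)%N%:Z] = zero s.
  apply/ffunP => w; rewrite !ffunE /g; have [m [hm ->]] := hu w.
  by rewrite absz_nat divn_small // (leq_ltn_trans hm) // ltn_expl.
rewrite Hu; apply: reach_trans Hn _; rewrite Hz.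
rewrite -signr_odd.
case: hsg => /= ->; case: (odd n) => /=; rewrite ?mulr1 ?mulrN1 ?mul1r ?opprK;
  first [exact: reach_refl | exact: (flip Hs 1) | (have := flip Hs (-1); rewrite opprK; exact)].
Qed.

End S3.

Theorem proposition2p3 (s : nat) (hs : (2 <= s)%N) :
  (* V_0 is finite *)
  (exists l : seq (vertex s), forall v, V0 v -> v \in l) /\
  (* G_0 is strongly connected *)
  (forall v w : vertex s, V0 v -> V0 w -> reachable v w) /\
  (* G_0 is aperiodic: the only common divisor of all directed cycle lengths is 1 *)
  (forall d : nat, (forall p : seq (vertex s), dcycle p -> (d %| size p)%N) -> d = 1%N) /\
  (* R(V_0) = V_0 *)
  (forall v : vertex s, V0 v -> V0 (Rmap v)) /\
  (forall w : vertex s, V0 w -> exists v, V0 v /\ Rmap v = w).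
Proof.
have Hs : (0 < s)%N by lia.
have I0 : Inv (v0 s).
  split; last by left.
  by move=> w; exists 0%N; rewrite ffunE.
have RV : forall v : vertex s, V0 v -> V0 (Rmap v).
  move=> v Hv; exact: reach_trans (flip Hs 1) (reach_R Hv).
split.
  exists [seq (x, y) | x <- [seq [ffun w => (val (f w))%:Z] | f : {ffun omega_t s -> 'I_s.+1} <- enum {ffun omega_t s -> 'I_s.+1}], y <- [:: (1 : int); -1]].
  case=> u sg Hv; have [hu hsg] := reach_Inv Hv I0.
  apply: allpairs_f.
    apply/mapP; exists [ffun w => inord `|u w|%N]; first by rewrite mem_enum.
    apply/ffunP => w; rewrite !ffunE; have [n [hn ->]] := hu w.
    by rewrite absz_nat; congr Posz; rewrite /= inordK.
  by case: hsg => /= ->; rewrite !inE eqxx ?orbT.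
split.
  move=> v w Hv Hw; exact: reach_trans (to_v0 Hs (reach_Inv Hv I0)) Hw.
split.
  move=> d Hd; apply/eqP; rewrite -dvdn1; apply: (Hd [:: v0 s]).
  split=> //.
    rewrite /= andbT; apply: (edge_of (e := ezero s)) => /=.
      by rewrite delta_zero; apply/ffunP => w; rewrite !ffunE.
    by rewrite unorm_zero expr0 mulr1.
  by move=> x; rewrite inE => /eqP ->; exact: reach_refl.
split=> //.
move=> w Hw; exists (Rmap w); split; first exact: RV.
by case: w {Hw} => u sg; rewrite /Rmap /= opprK.
Qed.
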